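(* Let $s,k$ be positive integers, $\vec s=(s,\dots,s)\in\mathbb{Z}_+^k$ and $n=ks$. Then there exist two $\vec s$-multipermutations $\pi,\pi'$ such that \[ \max\bigl(\mathrm{LCS}(\pi,\pi'),\ \mathrm{LCS}(\pi,\overleftarrow{\pi'})\bigr)\leq\sqrt n+s. \]
   Context: For $\vec s\in\mathbb{Z}_+^k$, an $\vec s$-multipermutation is a word over $\{1,\dots,k\}$ in which each letter $l$ appears exactly $s_l$ times. $\mathrm{LCS}(w,w')$ is the length of a longest common subsequence of words $w,w'$. For a word $w$, $\overleftarrow{w}$ denotes its reverse (the word written backward). *)

(* Defs.v *)
From mathcomp Require Import all_boot.
From Stdlib Require Import Reals.
Set Implicit Arguments. Unset Strict Implicit. Unset Printing Implicit Defensive.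

(* Words over the alphabet {1,...,k} are represented as sequences over 'I_k
   (letter l+1 of the paper is the ordinal l). *)

Definition is_multiperm (k : nat) (svec : 'I_k -> nat) (w : seq 'I_k) : Prop :=
  forall l : 'I_k, count_mem l w = svec l.

Definition LCS (T : eqType) (w w' : seq T) : nat :=
  \max_(m : (size w).-tuple bool | subseq (mask m w) w') size (mask m w).

(* Main.v *)
Require Import Defs.
From mathcomp Require Import all_boot.
From Stdlib Require Import Reals.
From mathcomp Require Import all_boot.
From mathcomp Require Import zify.

Lemma split_sub (u x y : seq nat) : subseq u (x ++ y) ->
  exists u1 u2, [/\ u = u1 ++ u2, subseq u1 x & subseq u2 y].
Proof.
move/subseqP=> [m sz ->].
exists (mask (take (size x) m) x), (mask (drop (size x) m) y).
rewrite -{1}(cat_take_drop (size x) m) mask_cat ?mask_subseq //.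
by rewrite size_takel // sz size_cat leq_addr.
Qed.

Lemma ltn_sorted_size (u : seq nat) a : sorted ltn (a :: u) -> size u + a <= last a u.
Proof.
elim: u a => [|c u IH] a //= /andP[ac pu].
have := IH c pu; lia.
Qed.

Lemma sorted_leq_last (t1 t2 : seq nat) a d :
  sorted leq ((a :: t1) ++ d :: t2) -> last a t1 <= d.
Proof. by rewrite /= cat_path /= => /and3P[]. Qed.

Lemma up_pieces (ps : seq (seq nat)) : all (sorted ltn) ps ->
  forall (u : seq nat) (a : nat), subseq (a :: u) (flatten ps) -> sorted leq (a :: u) ->
  size u + a < last a u + size ps.
Proof.
elim: ps => [|x ps IH] /=; first by move=> _ u a; rewrite /= ?subseq0.
move=> /andP[sx aps] u a /split_sub [[|c t1] [[|d t2] [E s1 s2]]] so.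
- by [].
- case: E => ??; subst d t2; have := IH aps u a s2 so; lia.
- move: E; rewrite cats0 => -[ec eu]; subst c u.
  have := @ltn_sorted_size _ _ (subseq_sorted ltn_trans s1 sx); lia.
- move: E => -[ec eu]; subst c u.
  have h1 := @ltn_sorted_size _ _ (subseq_sorted ltn_trans s1 sx).
  move: so; rewrite cat_path => /andP[_ so2].
  have h3 : last a t1 <= d by move: so2 => /= /andP[].
  have h2 := IH aps t2 d s2 (path_sorted so2).
  rewrite last_cat /= size_cat /=; lia.
Qed.

Lemma sorted_both (v : seq nat) : sorted ltn v -> sorted (fun x y => y <= x) v -> size v <= 1.
Proof. case: v => [|a [|c v]] //= /andP[ac _] /andP[ca _]; lia. Qed.

Lemma geq_trans' : transitive (fun x y : nat => y <= x).
Proof. move=> a b c; lia. Qed.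

Lemma down_pieces (ps : seq (seq nat)) : all (sorted ltn) ps ->
  forall (u : seq nat), subseq u (flatten ps) -> sorted (fun x y => y <= x) u -> size u <= size ps.
Proof.
elim: ps => [|x ps IH] /=; first by move=> _ u; rewrite /= => /eqP->.
move=> /andP[sx aps] u /split_sub [u1 [u2 [E s1 s2]]]; subst u => so.
have := @sorted_both _ (subseq_sorted ltn_trans s1 sx) (cat_sorted2 so).1.
have := IH aps u2 s2 (cat_sorted2 so).2.
rewrite size_cat; lia.
Qed.

Lemma mem_flatten_nseq (x : nat) n l : x \in flatten (nseq n l) -> x \in l.
Proof. by elim: n => //= n IH; rewrite mem_cat => /orP[|/IH]. Qed.
Arguments mem_flatten_nseq {x n l}.

Lemma count_flatten_nseq (x : nat) n l : count_mem x (flatten (nseq n l)) = n * count_mem x l.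
Proof. elim: n => //= n IH; rewrite count_cat IH mulSn //. Qed.
Section Constr.
Variables s k b : nat.

Definition G j := [seq x <- iota (j*b) b | x < k].
Fixpoint P g := if g is g'.+1 then nseq s (G g') ++ P g' else [::].
Definition W g := flatten (P g).
Fixpoint S i := if i is i'.+1 then S i' ++ nseq s i' else [::].

Lemma G_sorted j : sorted ltn (G j).
Proof. apply: sorted_filter; [exact: ltn_trans|exact: iota_ltn_sorted]. Qed.

Lemma mem_G x j : x \in G j -> [/\ j*b <= x, x < j*b + b & x < k].
Proof. rewrite mem_filter mem_iota => /andP[xk /andP[h1 h2]]; by split. Qed.
Arguments mem_G {x j}.

Lemma count_G x j : count_mem x (G j) = ((j*b <= x < j*b+b) && (x<k)).
Proof.
rewrite count_uniq_mem ?filter_uniq ?iota_uniq // mem_filter mem_iota andbC //.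
Qed.

Lemma P_sorted g : all (sorted ltn) (P g).
Proof. elim: g => //= g IH; rewrite all_cat IH andbT; apply/allP => y /nseqP[-> _]; exact: G_sorted. Qed.

Lemma size_P g : size (P g) = g * s.
Proof. elim: g => //= g IH; rewrite size_cat size_nseq IH mulSn //. Qed.

Lemma W_cat g : W g.+1 = flatten (nseq s (G g)) ++ W g.
Proof. by rewrite /W /= flatten_cat. Qed.

Lemma mem_W x g : x \in W g -> x < g*b /\ x < k.
Proof.
elim: g => [|g IH]; first by [].
rewrite W_cat mem_cat => /orP[/mem_flatten_nseq/mem_G[_ h1 h2]|/IH[h1 h2]]; rewrite mulSn; lia.
Qed.

Arguments mem_W {x g}.
Lemma count_W x g : count_mem x (W g) = s * ((x < g*b) && (x < k)).
Proof.
elim: g => [|g IH]; first by rewrite /W /= muln0.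
rewrite W_cat count_cat count_flatten_nseq count_G IH mulSn.
case: (ltnP x k) => xk; rewrite ?andbT ?andbF ?muln0 //.
case: (ltnP x (g*b)) => h1; case: (ltnP x (b + g*b)) => h2 //=;
 rewrite ?muln0 ?muln1 ?addn0 ?add0n; try lia.
Qed.

Lemma up_W g (u : seq nat) : subseq u (W g) -> sorted leq u -> size u <= b.-1 + s.
Proof.
elim: g u => [|g IH] u; first by rewrite /W /= => /eqP->.
rewrite W_cat => /split_sub [[|a t1] [[|d t2] [E s1 s2]]]; subst u => so.
- by [].
- by apply: IH.
- rewrite cats0 in so *.
  have := @up_pieces (nseq s (G g)) _ t1 a s1 so.
  rewrite size_nseq.
  have [ha _ _] := mem_G (mem_flatten_nseq (mem_subseq s1 (mem_head a t1))).
  have hl : @last nat a t1 < g*b + b.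
    by have [_ hl _] := mem_G (mem_flatten_nseq (mem_subseq s1 (mem_last a t1))).
  have hall : all (sorted ltn) (nseq s (G g)) by apply/allP => y /nseqP[-> _]; exact: G_sorted.
  move=> /(_ hall) /= h; rewrite -subn1; lia.
- have ha : g*b <= @last nat a t1.
    by have [ha _ _] := mem_G (mem_flatten_nseq (mem_subseq s1 (mem_last a t1))).
  have [hd _] := mem_W (mem_subseq s2 (mem_head d t2)).
  move: so => /=; rewrite cat_path => /andP[_ /= /andP[h _]]; lia.
Qed.

Lemma down_W g (u : seq nat) : subseq u (W g) -> sorted (fun x y => y <= x) u -> size u <= g * s.
Proof. move=> su so; rewrite -(size_P g); exact: down_pieces (P_sorted g) u su so. Qed.

Lemma mem_S x i : x \in S i -> x < i.
Proof.
elim: i => [|i IH] //=; rewrite mem_cat => /orP[/IH|/nseqP[-> _]]; lia.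
Qed.

Lemma S_sorted i : sorted leq (S i).
Proof.
rewrite sorted_pairwise; last exact: leq_trans.
elim: i => [|i IH] //=; rewrite pairwise_cat IH /=; apply/andP; split.
  apply/allrelP => x y /mem_S xi /nseqP[-> _]; lia.
elim: s => //= n ->; rewrite andbT; apply/allP => y /nseqP[-> _] //.
Qed.

Lemma count_S x i : count_mem x (S i) = s * (x < i).
Proof.
elim: i => [|i IH] /=; first by rewrite muln0.
rewrite count_cat IH count_nseq /=.
case: (ltngtP x i) => h; rewrite ?muln0 ?muln1 ?mul0n ?mul1n ?addn0 //; try lia.
Qed.
End Constr.

From Stdlib Require Import Reals Lra.

Lemma realb (L X N s : nat) : L <= X + s -> X * X <= N ->
  (INR L <= sqrt (INR N) + INR s)%R.
Proof.
move=> h1 h2.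
have hX : (INR X <= sqrt (INR N))%R.
  rewrite -(sqrt_square (INR X)); last exact: pos_INR.
  apply: sqrt_le_1_alt; rewrite -mult_INR; apply: le_INR; exact/leP.
apply: Rle_trans (_ : INR (X + s) <= _)%R.
  by apply: le_INR; apply/leP.
rewrite plus_INR; lra.
Qed.

Lemma choose_sq N : 0 < N -> exists b, [/\ 0 < b, N <= b * b & b.-1 * b.-1 < N].
Proof.
move=> N0.
have ex : exists b, N <= b * b by exists N; nia.
case: (ex_minnP ex) => b Hb Hmin; exists b.
have b0 : 0 < b by case: b Hb Hmin => //; rewrite leqNgt N0.
split => //; rewrite ltnNge; apply/negP => h.
have := Hmin _ h; case: b b0 {Hb Hmin h} => // b _ /=; lia.
Qed.

Lemma choose_g k b : 0 < k -> 0 < b -> exists g, k <= g * b /\ g.-1 * b < k.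
Proof.
move=> k0 b0.
have ex : exists g, k <= g * b by exists k; nia.
case: (ex_minnP ex) => g Hg Hmin; exists g.
have g0 : 0 < g by case: g Hg Hmin => //; rewrite mul0n leqNgt k0.
split => //; rewrite ltnNge; apply/negP => h.
have := Hmin _ h; case: g g0 {Hg Hmin h} => // g _ /=; lia.
Qed.

Definition toI k (l : seq nat) : seq 'I_k := pmap insub l.

Lemma val_toI k (l : seq nat) : all (fun x => x < k) l -> map val (toI k l) = l.
Proof.
elim: l => [|x l IH] //= /andP[xk al].
rewrite /toI /=; case: insubP => [y _ vy|]; last by rewrite xk.
rewrite /= vy; congr (_ :: _); exact: IH al.
Qed.

Lemma count_valI k (y : 'I_k) (t : seq 'I_k) : count_mem y t = count_mem (val y) (map val t).
Proof. rewrite count_map; apply: eq_count => i /=; by rewrite val_eqE. Qed.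

Theorem theorem13 (s k : nat) (hs : 0 < s) (hk : 0 < k) :
  exists pi pi' : seq 'I_k,
    is_multiperm (fun _ => s) pi /\ is_multiperm (fun _ => s) pi' /\
    (INR (maxn (LCS pi pi') (LCS pi (rev pi'))) <= sqrt (INR (k * s)) + INR s)%R.
Proof.
have ks0 : 0 < k * s by rewrite muln_gt0 hk hs.
have [b [b0 hb1 hb2]] := @choose_sq _ ks0.
have [g [hg1 hg2]] := @choose_g _ _ hk b0.
have g0 : 0 < g by move: hg1; case: g {hg2} => //; rewrite mul0n leqNgt hk.
set w := W s k b g.
set st := S s k.
have wk : all (fun x => x < k) w by apply/allP => x /mem_W [].
have sk : all (fun x => x < k) st by apply/allP => x /mem_S.
exists (toI k w), (toI k st); split; [|split].
- move=> l; rewrite count_valI val_toI // count_W.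
  have lk := ltn_ord l; rewrite lk andbT.
  have h : val l < g * b := leq_trans (ltn_ord l) hg1; by rewrite h muln1.
- by move=> l; rewrite count_valI val_toI // count_S ltn_ord muln1.
have L1 : LCS (toI k w) (toI k st) <= b.-1 + s.
  apply/bigmax_leqP => m Hm.
  rewrite -(size_map val) map_mask val_toI //.
  apply: up_W (mask_subseq _ _) _.
  move/(map_subseq val): Hm; rewrite map_mask !val_toI // => Hm.
  apply: (subseq_sorted _ Hm); [exact: leq_trans|exact: S_sorted].
have L2 : LCS (toI k w) (rev (toI k st)) <= g.-1 * s + s.
  apply/bigmax_leqP => m Hm.
  rewrite -(size_map val) map_mask val_toI //.
  have -> : g.-1 * s + s = g * s by rewrite -mulSnr prednK.
  apply: down_W (mask_subseq _ _) _.
  move/(map_subseq val): Hm; rewrite map_mask map_rev !val_toI // => Hm.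
  apply: (subseq_sorted _ Hm); first exact: geq_trans'.
  by rewrite rev_sorted; exact: (S_sorted s k).
have X1 : b.-1 * b.-1 <= k * s by exact: ltnW.
have X2 : g.-1 * s * (g.-1 * s) <= k * s.
  move: (g.-1) hg2 => X hX.
  rewrite -(leq_pmul2r ks0).
  have h1 : X*s*(X*s)*(k*s) <= X*s*(X*s)*(b*b) := leq_mul (leqnn _) hb1.
  have h2 : X*b*(X*b)*(s*s) <= k*k*(s*s) := leq_mul (leq_mul (ltnW hX) (ltnW hX)) (leqnn _).
  have e1 : X*s*(X*s)*(b*b) = X*b*(X*b)*(s*s) by nia.
  have e2 : k*k*(s*s) = k*s*(k*s) by nia.
  by apply: (leq_trans h1); rewrite e1 -e2.
rewrite /maxn; case: ifP => _.
- exact: realb L2 X2.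
- exact: realb L1 X1.
Qed.
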